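(* Let $L$ be a real vector space endowed with a vector preorder $\le$ (a preorder compatible with addition and multiplication by nonnegative scalars), let $C\subset L$ be a linear subspace and $M\subset C$ a nonempty linear subspace such that $C$ is exhaustive (for every $X\in L$ there is $X_0\in C$ with $X_0\ge X$). Let $H\colon C\to\mathbb{R}$ be a convex premium principle, let $L'_+$ be the set of all monotone linear functionals $\mu\colon L\to\mathbb{R}$, and for $\mu\in L'_+$ let $H^*(\mu):=\sup_{X\in C}(\mu(X)-H(X))\in[0,\infty]$. Let $R_{\mathrm{Max}}(X):=\inf\{H(X_0)\mid X_0\in C,\ X_0\ge X\}$ for $X\in L$. Then $$R_{\mathrm{Max}}(X)=\max_{\mu\in L'_+}\big(\mu(X)-H^*(\mu)\big)\quad\text{for all }X\in L,$$ $$H^*(\mu)=\sup_{X\in L}\big(\mu(X)-R_{\mathrm{Max}}(X)\big)\quad\text{for all }\mu\in L'_+,$$ and $H^*(\mu)<\infty$ implies $\mu(m)=H(m)$ for all $m\in M$.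
   Context: A premium principle is a map $H\colon C\to\mathbb{R}$ with (P1') $H(X+m)=H(X)+H(m)$ for all $X\in C$, $m\in M$; (P2') $H(0)=0$ and $H(X)\ge0$ for all $X\in C$ with $X\ge0$; (P3') $\inf\{H(X_0)\mid X_0\in C,\ X_0\ge X\}>-\infty$ for all $X\in L$. Convex means $H(\lambda X+(1-\lambda)Y)\le\lambda H(X)+(1-\lambda)H(Y)$ for $X,Y\in C$, $\lambda\in[0,1]$. A linear functional $\mu$ is monotone if $\mu(X)\le\mu(Y)$ whenever $X\le Y$. *)

(* Defs.v *)
From HB Require Import structures.
From mathcomp Require Import all_boot all_order all_algebra.
From mathcomp Require Import all_classical all_reals ereal.
Set Implicit Arguments. Unset Strict Implicit. Unset Printing Implicit Defensive.
Import Order.TTheory GRing.Theory Num.Theory.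
Local Open Scope classical_set_scope.
Local Open Scope ring_scope.

Section Defs.
Variables (R : realType) (L : lmodType R).

Definition vector_preorder (le : L -> L -> Prop) : Prop :=
  [/\ forall X, le X X,
      forall X Y Z, le X Y -> le Y Z -> le X Z,
      forall X Y Z, le X Y -> le (X + Z) (Y + Z)
    & forall (a : R) X Y, 0 <= a -> le X Y -> le (a *: X) (a *: Y)].

Definition is_subspace (S : set L) : Prop :=
  S 0 /\ forall (a : R) x y, S x -> S y -> S (a *: x + y).

Definition exhaustive (le : L -> L -> Prop) (C : set L) : Prop :=
  forall X, exists X0, C X0 /\ le X X0.

Definition RMax (le : L -> L -> Prop) (C : set L) (H : L -> R) (X : L) : \bar R :=
  ereal_inf [set (H X0)%:E | X0 in [set X0 | C X0 /\ le X X0]].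

(* premium principle H : C -> R (values of H outside C are irrelevant) *)
Definition premium_principle (le : L -> L -> Prop) (C M : set L) (H : L -> R) : Prop :=
  [/\ forall X m, C X -> M m -> H (X + m) = H X + H m,
      H 0 = 0,
      forall X, C X -> le 0 X -> 0 <= H X
    & forall X, (-oo < RMax le C H X)%E].

Definition convex_on (C : set L) (H : L -> R) : Prop :=
  forall X Y (l : R), C X -> C Y -> 0 <= l <= 1 ->
    H (l *: X + (1 - l) *: Y) <= l * H X + (1 - l) * H Y.

Definition linear_functional (mu : L -> R) : Prop :=
  forall (a : R) x y, mu (a *: x + y) = a * mu x + mu y.

Definition monotone (le : L -> L -> Prop) (mu : L -> R) : Prop :=
  forall X Y, le X Y -> mu X <= mu Y.

Definition monotone_linear (le : L -> L -> Prop) (mu : L -> R) : Prop :=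
  linear_functional mu /\ monotone le mu.

Definition Hstar (C : set L) (H : L -> R) (mu : L -> R) : \bar R :=
  ereal_sup [set (mu X - H X)%:E | X in C].

End Defs.

(* Main.v *)
Require Import Defs.
From HB Require Import structures.
From mathcomp Require Import all_boot all_order all_algebra.
From mathcomp Require Import all_classical all_reals ereal.
Import Order.TTheory GRing.Theory Num.Theory.
Local Open Scope classical_set_scope.
Local Open Scope ring_scope.
From mathcomp Require Import ring lra.
Set Implicit Arguments. Unset Strict Implicit. Unset Printing Implicit Defensive.



Section HBsec.
Variables (R : realType) (L : lmodType R) (F : L -> R).
Hypothesis Fconv : forall X Y (l:R), 0 <= l <= 1 ->
  F (l *: X + (1 - l) *: Y) <= l * F X + (1 - l) * F Y.
Hypothesis F0 : F 0 = 0.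

Definition good (W : set L) (g : L -> R) :=
  [/\ W 0, (forall a x y, W x -> W y -> W (a *: x + y)),
      (forall a x y, W x -> W y -> g (a *: x + y) = a * g x + g y)
    & forall x, W x -> g x <= F x].

Record pf := PF { pf_W : set L; pf_g : L -> R; pf_good : good pf_W pf_g }.

Definition ext (p q : pf) : bool :=
  `[< pf_W p `<=` pf_W q /\ forall x, pf_W p x -> pf_g q x = pf_g p x >].

Lemma comb (a r1 r2 : R) (w1 w2 v : L) :
  a *: (w1 + r1 *: v) + (w2 + r2 *: v) = (a *: w1 + w2) + (a * r1 + r2) *: v.
Proof. by rewrite scalerDr scalerA scalerDl addrACA. Qed.

Lemma key (W : set L) g v w w' s t : good W g -> W w -> W w' -> 0 < s -> 0 < t ->
  (g w - F (w - s *: v)) / s <= (F (w' + t *: v) - g w') / t.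
Proof.
case=> W0 Wc gl gF Ww Ww' s0 t0.
have st0 : 0 < s + t by lra.
pose l := s / (s + t).
have l01 : 0 <= l <= 1.
  by apply/andP; split; rewrite /l ?divr_ge0 ?ler_pdivrMr //; lra.
have lt : l * t = (1 - l) * s by rewrite /l; field; lra.
have hz : l *: (w' + t *: v) + (1 - l) *: (w - s *: v) = l *: w' + (1 - l) *: w.
  by rewrite !scalerDr !scalerN !scalerA lt addrACA subrr addr0.
have Wz : W (l *: w' + (1 - l) *: w).
  by apply: (Wc) => //; rewrite -[_ *: w]addr0; apply: (Wc).
have g0 : g 0 = 0.
  have := gl 1 0 0 W0 W0; rewrite scale1r addr0 mul1r; lra.
have gz : g (l *: w' + (1 - l) *: w) = l * g w' + (1 - l) * g w.
  rewrite gl //; last by rewrite -[_ *: w]addr0; apply: (Wc).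
  by rewrite -[_ *: w]addr0 gl // g0 addr0.
have := Fconv (w' + t *: v) (w - s *: v) l01; rewrite hz.
have := gF _ Wz; rewrite gz => h1 h2.
have h3 : s * g w' + t * g w <= s * F (w' + t *: v) + t * F (w - s *: v).
  have e1 : s * g w' + t * g w = (s + t) * (l * g w' + (1 - l) * g w).
    by rewrite /l; field; lra.
  have e2 : s * F (w' + t *: v) + t * F (w - s *: v) =
     (s + t) * (l * F (w' + t *: v) + (1 - l) * F (w - s *: v)).
    by rewrite /l; field; lra.
  rewrite e1 e2 ler_pM2l //; exact: le_trans h2.
rewrite ler_pdivrMr // mulrAC ler_pdivlMr //.
nra.
Qed.


Lemma extend (p : pf) v : ~ pf_W p v -> exists q : pf, ext p q /\ pf_W q v.
Proof.
case: p => W g gd /= Wv.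
have gd' := gd; case: gd' => W0 Wc gl gF.
have g0 : g 0 = 0.
  have := gl 1 0 0 W0 W0; rewrite scale1r addr0 mul1r; lra.
pose A := [set y : R | exists w s, [/\ W w, 0 < s & y = (g w - F (w - s *: v)) / s]].
have hA : has_sup A.
  rewrite /has_sup /has_ubound; split; first by exists ((g 0 - F (0 - 1 *: v)) / 1), 0, 1.
  exists ((F (0 + 1 *: v) - g 0) / 1) => y [w [s [Ww s0 ->]]].
  exact: (key v gd Ww W0 s0 ltr01).
pose c := sup A.
have cl : forall w s, W w -> 0 < s -> (g w - F (w - s *: v)) / s <= c.
  by move=> w s Ww s0; apply: sup_upper_bound => //; exists w, s.
have cu : forall w t, W w -> 0 < t -> c <= (F (w + t *: v) - g w) / t.
  move=> w t Ww t0; apply: ge_sup; first by case: hA.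
  by move=> y [w' [s [Ww' s0 ->]]]; exact: (key v gd Ww' Ww s0 t0).
have uniq : forall w1 w2 r1 r2, W w1 -> W w2 -> w1 + r1 *: v = w2 + r2 *: v ->
    r1 = r2 /\ w1 = w2.
  move=> w1 w2 r1 r2 W1 W2 e.
  have r12 : r1 = r2.
    apply/eqP; apply/negPn/negP => ne; apply: Wv.
    have -> : v = (r1 - r2)^-1 *: (w2 - w1).
      have -> : w2 - w1 = (r1 - r2) *: v.
        have ew2 : w2 = w1 + r1 *: v - r2 *: v by rewrite e addrK.
        by rewrite scalerBl ew2 addrAC [w1 + _]addrC addrK.
      by rewrite scalerA mulVf ?scale1r // subr_eq0.
    rewrite -[_ *: _]addr0; apply: (Wc) => //.
    rewrite -scaleN1r addrC; apply: (Wc) => //.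
  by split=> //; move: e; rewrite r12 => /addIr.
pose W' := [set x | exists w r, W w /\ x = w + r *: v].
pose g' := fun x => match pselect (exists wr : L * R, W wr.1 /\ x = wr.1 + wr.2 *: v) with
   | left e => let wr := projT1 (cid e) in g wr.1 + wr.2 * c
   | right _ => 0 end.
have g'E : forall w r, W w -> g' (w + r *: v) = g w + r * c.
  move=> w r Ww; rewrite /g'; case: pselect => [e|]; last first.
    by move=> []; exists (w, r).
  case: (cid e) => [[w1 r1]] /= [W1 e1].
  by case: (uniq _ _ _ _ Ww W1 e1) => -> ->.
have gd2 : good W' g'.
  split.
  - by exists 0, 0; rewrite scale0r addr0.
  - move=> a _ _ [w1 [r1 [W1 ->]]] [w2 [r2 [W2 ->]]].
    by exists (a *: w1 + w2), (a * r1 + r2); rewrite comb; split=> //; apply: (Wc).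
  - move=> a _ _ [w1 [r1 [W1 ->]]] [w2 [r2 [W2 ->]]].
    rewrite comb !g'E //; last by apply: (Wc).
    rewrite gl //; ring.
  - move=> _ [w [r [Ww ->]]]; rewrite g'E //.
    have [r0|r0|->] := ltgtP r 0.
    + have := cl w (- r) Ww; rewrite oppr_gt0 => /(_ r0).
      rewrite scaleNr opprK ler_pdivrMr ?oppr_gt0 //; lra.
    + have := cu w r Ww r0; rewrite ler_pdivlMr //; lra.
    + by rewrite scale0r addr0 mul0r addr0; exact: gF.
exists (PF gd2); split; last by exists 0, 1; rewrite scale1r add0r.
apply/asboolP; split => /=.
  by move=> x Wx; exists x, 0; rewrite scale0r addr0.
by move=> x Wx; have := g'E x 0 Wx; rewrite scale0r addr0 mul0r addr0.
Qed.


Lemma HB_exists : exists mu : L -> R,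
  (forall a x y, mu (a *: x + y) = a * mu x + mu y) /\ forall x, mu x <= F x.
Proof.
have gd0 : good [set 0] (fun _ => 0).
  split.
  - by [].
  - by move=> a x y -> ->; rewrite scaler0 addr0.
  - by move=> *; rewrite mulr0 addr0.
  - by move=> x ->; rewrite F0.
have [t tmax] : exists t, premaximal ext t.
  apply: (ZL_preorder (PF gd0)).
  - by move=> t; apply/asboolP; split.
  - move=> p q r /asboolP [pq pq'] /asboolP [qr qr']; apply/asboolP; split.
      by move=> x /pq /qr.
    by move=> x px; rewrite qr' ?pq' //; exact: pq.
  move=> A Atot.
  have [[p0 Ap0]|A0] := pselect (A !=set0); last first.
    by exists (PF gd0) => s As; exfalso; apply: A0; exists s.
  pose W := [set x | exists p, A p /\ pf_W p x].
  pose g := fun x => match pselect (exists p, A p /\ pf_W p x) with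
    | left e => pf_g (projT1 (cid e)) x | right _ => 0 end.
  have gE : forall p x, A p -> pf_W p x -> g x = pf_g p x.
    move=> p x Ap px; rewrite /g; case: pselect => [e|[]]; last by exists p.
    case: (cid e) => q [Aq qx] /=.
    have [/asboolP [_ h]|/asboolP [_ h]] := Atot _ _ Ap Aq; first exact: h.
    by rewrite h.
  have pair : forall p q, A p -> A q -> exists r, [/\ A r, pf_W p `<=` pf_W r & pf_W q `<=` pf_W r].
    move=> p q Ap Aq; have [/asboolP [h _]|/asboolP [h _]] := Atot _ _ Ap Aq.
      by exists q; split=> // x.
    by exists p; split=> // x.
  have gdU : good W g.
    split.
    - by exists p0; split=> //; case: (pf_good p0).
    - move=> a x y [p [Ap px]] [q [Aq qy]].
      have [r [Ar pr qr]] := pair _ _ Ap Aq.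
      exists r; split=> //; case: (pf_good r) => _ Wc _ _; apply: Wc; [exact: pr|exact: qr].
    - move=> a x y [p [Ap px]] [q [Aq qy]].
      have [r [Ar pr qr]] := pair _ _ Ap Aq.
      case: (pf_good r) => _ Wc gl _.
      rewrite (gE r) //; last by apply: Wc; [exact: pr|exact: qr].
      by rewrite (gE r x) ?(gE r y) //; [apply: gl; [exact: pr|exact: qr]|exact: qr|exact: pr].
    - move=> x [p [Ap px]]; rewrite (gE p) //; case: (pf_good p) => _ _ _; exact.
  exists (PF gdU) => p Ap; apply/asboolP; split => /=.
    by move=> x px; exists p.
  by move=> x px; exact: gE.
have Wall : forall x, pf_W t x.
  move=> v; apply: contrapT => tv.
  have [q [tq qv]] := extend tv.
  by have /asboolP [h _] := tmax _ tq; apply: tv; exact: h.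
exists (pf_g t); case: (pf_good t) => _ _ gl gF; split.
  by move=> a x y; apply: gl.
by move=> x; apply: gF.
Qed.

End HBsec.

Section Main.
Variables (R : realType) (L : lmodType R) (le : L -> L -> Prop)
  (C M : set L) (H : L -> R).
Hypothesis hpre : vector_preorder le.
Hypothesis hC : is_subspace C.
Hypothesis hM : is_subspace M.
Hypothesis MC : M `<=` C.
Hypothesis hex : exhaustive le C.
Hypothesis hprem : premium_principle le C M H.
Hypothesis hconv : convex_on C H.

Let f X := fine (RMax le C H X).

Lemma le_refl' X : le X X. Proof. by case: hpre. Qed.
Lemma le_trans' X Y Z : le X Y -> le Y Z -> le X Z. Proof. by case: hpre => _ h _ _; apply: h. Qed.
Lemma le_add X Y Z : le X Y -> le (X + Z) (Y + Z). Proof. by case: hpre => _ _ h _; apply: h. Qed.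
Lemma le_scale a X Y : 0 <= a -> le X Y -> le (a *: X) (a *: Y). Proof. by case: hpre => _ _ _ h; apply: h. Qed.

Lemma le_comb a b X X0 Y Y0 : 0 <= a -> 0 <= b -> le X X0 -> le Y Y0 ->
  le (a *: X + b *: Y) (a *: X0 + b *: Y0).
Proof.
move=> a0 b0 h1 h2; apply: (@le_trans' _ (a *: X0 + b *: Y)).
  by apply: le_add; apply: le_scale.
by rewrite ![a *: X0 + _]addrC; apply: le_add; apply: le_scale.
Qed.

Lemma C0 : C 0. Proof. by case: hC. Qed.
Lemma Cc a x y : C x -> C y -> C (a *: x + y). Proof. by case: hC => _ h; apply: h. Qed.
Lemma CZ a x : C x -> C (a *: x). Proof. by move=> Cx; rewrite -[_ *: x]addr0; apply: Cc => //; apply: C0. Qed.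

Lemma RMax_fin X : RMax le C H X = (f X)%:E.
Proof.
rewrite /f fineK // fin_numE; apply/andP; split.
  by case: hprem => _ _ _ /(_ X) h; rewrite gt_eqF.
have [X0 [CX0 le0]] := hex X.
have : (RMax le C H X <= (H X0)%:E)%E by apply: ereal_inf_lbound; exists X0.
by move=> h; rewrite lt_eqF // (le_lt_trans h) // ltey.
Qed.

Lemma fA Z Z0 : C Z0 -> le Z Z0 -> f Z <= H Z0.
Proof.
move=> CZ0 lZ; rewrite -lee_fin -RMax_fin; apply: ereal_inf_lbound; by exists Z0.
Qed.

Lemma fB Z e : 0 < e -> exists Z0, [/\ C Z0, le Z Z0 & H Z0 < f Z + e].
Proof.
move=> e0; have := @lb_ereal_inf_adherent R [set (H X0)%:E | X0 in [set X0 | C X0 /\ le Z X0]] e e0.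
rewrite -[ereal_inf _]/(RMax le C H Z) RMax_fin => /(_ isT) [_ [Z0 [CZ0 lZ] <-]].
by rewrite -EFinD lte_fin => h; exists Z0.
Qed.

Lemma f_mono Y Z : le Y Z -> f Y <= f Z.
Proof.
move=> lYZ; apply/ler_addgt0Pr => e e0.
have [Z0 [CZ0 lZ hZ]] := fB Z e0.
apply: le_trans (ltW hZ); apply: fA => //; exact: le_trans' lZ.
Qed.

Lemma f_conv X Y l : 0 <= l <= 1 -> f (l *: X + (1 - l) *: Y) <= l * f X + (1 - l) * f Y.
Proof.
move=> /andP [l0 l1]; apply/ler_addgt0Pr => e e0.
have [X0 [CX0 lX hX]] := fB X e0.
have [Y0 [CY0 lY hY]] := fB Y e0.
have l1' : 0 <= 1 - l by lra.
have h1 := fA (Cc l CX0 (CZ (1 - l) CY0)) (le_comb l0 l1' lX lY).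
have h2 := hconv CX0 CY0 (introT andP (conj l0 l1)).
have h3 : l * H X0 <= l * (f X + e) by apply: ler_wpM2l => //; exact: ltW.
have h4 : (1 - l) * H Y0 <= (1 - l) * (f Y + e) by apply: ler_wpM2l => //; exact: ltW.
have e1 : l * (f X + e) + (1 - l) * (f Y + e) = l * f X + (1 - l) * f Y + e by ring.
lra.
Qed.


Lemma lin0 (mu : L -> R) : linear_functional mu -> mu 0 = 0.
Proof. move=> h; have := h 1 0 0; rewrite scale1r addr0 mul1r; lra. Qed.

Lemma linB (mu : L -> R) x y : linear_functional mu -> mu (x - y) = mu x - mu y.
Proof. move=> h; rewrite addrC -scaleN1r h; ring. Qed.

Lemma linZ (mu : L -> R) a x : linear_functional mu -> mu (a *: x) = a * mu x.
Proof. by move=> h; rewrite -[_ *: x]addr0 h lin0 // addr0. Qed.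

Lemma H0 : H 0 = 0. Proof. by case: hprem. Qed.

Lemma Hstar_ge0 (mu : L -> R) : linear_functional mu -> (0 <= Hstar C H mu)%E.
Proof.
move=> h; apply: ereal_sup_ubound; exists 0; first exact: C0.
by rewrite lin0 // H0 subrr.
Qed.

Lemma part1b (mu : L -> R) X : monotone_linear le mu ->
  ((mu X)%:E - Hstar C H mu <= RMax le C H X)%E.
Proof.
case=> lin mono; apply: le_ereal_inf_tmp => _ [Z0 [CZ0 lXZ] <-].
have hs : ((mu Z0 - H Z0)%:E <= Hstar C H mu)%E by apply: ereal_sup_ubound; exists Z0.
have := mono _ _ lXZ.
move: hs; case: (Hstar C H mu) => [r| |] //=.
  by rewrite !lee_fin; lra.
by move=> _ _; rewrite addeNy leNye.
Qed.

Lemma part2 (mu : L -> R) : monotone_linear le mu ->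
  Hstar C H mu = ereal_sup [set ((mu X)%:E - RMax le C H X)%E | X in [set: L]].
Proof.
move=> hmu; apply/eqP; rewrite eq_le; apply/andP; split.
  apply: ge_ereal_sup => _ [Z CZ <-]; apply: le_ereal_sup_tmp.
  exists ((mu Z)%:E - RMax le C H Z)%E; first by exists Z.
  rewrite RMax_fin lee_fin; have := fA CZ (le_refl' Z); lra.
apply: ge_ereal_sup => _ [X _ <-].
have := part1b X hmu; have := Hstar_ge0 (proj1 hmu).
rewrite RMax_fin; case: (Hstar C H mu) => [r| |] //=.
by rewrite !lee_fin; lra.
by move=> *; exact: leey.
Qed.

Lemma part3 (mu : L -> R) : monotone_linear le mu -> (Hstar C H mu < +oo)%E ->
  forall m, M m -> mu m = H m.
Proof.
case=> lin mono hlt.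
have [r hr] : exists r, Hstar C H mu = r%:E.
  move: hlt (Hstar_ge0 lin); case: (Hstar C H mu) => [r| |] //= _ _; by exists r.
have Cm : forall m, M m -> C m by [].
have Hn : forall m n, M m -> H (n%:R *: m) = n%:R * H m.
  move=> m n Mm; elim: n => [|n IH]; first by rewrite scale0r H0 mul0r.
  have -> : n.+1%:R *: m = n%:R *: m + m by rewrite mulrSr scalerDl scale1r.
  case: hprem => hadd _ _ _; rewrite hadd //; last exact: CZ (MC Mm).
  by rewrite IH mulrSr mulrDl mul1r.
have neg : forall m, M m -> mu m - H m <= 0.
  move=> m Mm; rewrite leNgt; apply/negP => d0.
  have bd : forall n : nat, n%:R * (mu m - H m) <= r.
    move=> n; rewrite -lee_fin -hr; apply: ereal_sup_ubound.
    exists (n%:R *: m); first exact: CZ (MC Mm).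
    by rewrite linZ // Hn // mulrBr.
  have r0 : 0 <= r by rewrite -lee_fin -hr; exact: Hstar_ge0.
  have := archi_boundP (divr_ge0 r0 (ltW d0)).
  rewrite ltr_pdivrMr // => h.
  by have := bd (Num.bound (r / (mu m - H m))); lra.
move=> m Mm.
have Mn : M (- m).
  by rewrite -scaleN1r -[_ *: m]addr0; case: hM => M0 hc; apply: hc.
have Hneg : H (- m) = - H m.
  case: hprem => hadd _ _ _; have := hadd (- m) m (MC Mn) Mm.
  by rewrite addNr H0; lra.
have := neg _ Mn; rewrite Hneg -scaleN1r linZ // mulN1r.
have := neg _ Mm; lra.
Qed.

Lemma part1a X : exists2 mu : L -> R, monotone_linear le mu &
  RMax le C H X = ((mu X)%:E - Hstar C H mu)%E.
Proof.
pose F h := f (X + h) - f X.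
have Fconv : forall a b (l : R), 0 <= l <= 1 ->
    F (l *: a + (1 - l) *: b) <= l * F a + (1 - l) * F b.
  move=> a b l hl; rewrite /F.
  have -> : X + (l *: a + (1 - l) *: b) = l *: (X + a) + (1 - l) *: (X + b).
    rewrite !scalerDr addrACA -scalerDl.
    have e : l + (1 - l) = 1 by ring.
    by rewrite e scale1r.
  have := f_conv (X + a) (X + b) hl.
  have -> : l * (f (X + a) - f X) + (1 - l) * (f (X + b) - f X) =
    l * f (X + a) + (1 - l) * f (X + b) - f X by ring.
  lra.
have F0 : F 0 = 0 by rewrite /F addr0 subrr.
have [mu [lin muF]] := HB_exists Fconv F0.
have mono : monotone le mu.
  move=> Y Z lYZ.
  have h1 : le (X + (Y - Z)) X.
    have := le_add (X - Z) lYZ.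
    by rewrite addrCA [Z + _]addrC subrK.
  have := muF (Y - Z); rewrite /F linB //.
  have := f_mono h1; lra.
have hmu : monotone_linear le mu by [].
have hub : (Hstar C H mu <= (mu X - f X)%:E)%E.
  apply: ge_ereal_sup => _ [Z CZ <-]; rewrite lee_fin.
  have := fA CZ (le_refl' Z).
  have := muF (Z - X); rewrite /F linB // [X + _]addrC subrK.
  lra.
exists mu => //.
apply/eqP; rewrite eq_le; apply/andP; split; last exact: part1b.
move: hub (Hstar_ge0 lin); rewrite RMax_fin.
case: (Hstar C H mu) => [r| |] //=.
by rewrite !lee_fin; lra.
Qed.


Lemma main_all :
  [/\ (forall X : L,
         (exists2 mu : L -> R, monotone_linear le mu &
            RMax le C H X = ((mu X)%:E - Hstar C H mu)%E) /\
         (forall mu : L -> R, monotone_linear le mu ->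
            ((mu X)%:E - Hstar C H mu <= RMax le C H X)%E)),
      (forall mu : L -> R, monotone_linear le mu ->
         Hstar C H mu = ereal_sup [set ((mu X)%:E - RMax le C H X)%E | X in [set: L]])
    & (forall mu : L -> R, monotone_linear le mu ->
         (Hstar C H mu < +oo)%E -> forall m, M m -> mu m = H m)].
Proof.
split.
- by move=> X; split; [exact: part1a | move=> mu hmu; exact: part1b].
- exact: part2.
- exact: part3.
Qed.

End Main.


Theorem theorem4p8 (R : realType) (L : lmodType R) (le : L -> L -> Prop)
  (C M : set L) (H : L -> R) :
  vector_preorder le ->
  is_subspace C -> is_subspace M -> M `<=` C -> M !=set0 ->
  exhaustive le C ->
  premium_principle le C M H -> convex_on C H ->
  [/\ (forall X : L,
         (exists2 mu : L -> R, monotone_linear le mu &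
            RMax le C H X = ((mu X)%:E - Hstar C H mu)%E) /\
         (forall mu : L -> R, monotone_linear le mu ->
            ((mu X)%:E - Hstar C H mu <= RMax le C H X)%E)),
      (forall mu : L -> R, monotone_linear le mu ->
         Hstar C H mu = ereal_sup [set ((mu X)%:E - RMax le C H X)%E | X in [set: L]])
    & (forall mu : L -> R, monotone_linear le mu ->
         (Hstar C H mu < +oo)%E -> forall m, M m -> mu m = H m)].
Proof.
move=> *; apply: main_all; assumption.
Qed.
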